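(* Let $\lambda\in\Lambda(n,r)$, $1\le i\le n-1$, and let $\mathbf i=[i_1,\dots,i_r]$ be a word with letters in $\{1,\dots,n\}$. Then, viewing elements of $\mathbf S_0(n,r)$ as endomorphisms of $V_0^{\otimes r}$, $$e_{i,\lambda}(\bar\xi_{\mathbf i})=\begin{cases}\sum_{\mathbf j\in E_i(\mathbf i)}\bar\xi_{\mathbf j}&\text{if }\mathrm{cont}(\mathbf i)=\lambda,\\0&\text{otherwise},\end{cases}\qquad f_{i,\lambda}(\bar\xi_{\mathbf i})=\begin{cases}\sum_{\mathbf j\in F_i(\mathbf i)}\bar\xi_{\mathbf j}&\text{if }\mathrm{cont}(\mathbf i)=\lambda,\\0&\text{otherwise}.\end{cases}$$
   Context: $\mathbf H_r(0)$ is the $0$-Hecke algebra over $\mathbb C$, generated by $\bar\pi_1,\dots,\bar\pi_{r-1}$ with $\bar\pi_i^2=-\bar\pi_i$, the braid relations, and $\bar\pi_i\bar\pi_j=\bar\pi_j\bar\pi_i$ for $|i-j|\ge2$. $\bar\pi_w$ is defined via any reduced word of $w\in\mathfrak S_r$. $V_0=\mathbb C^n$ has basis $\bar\xi_1,\dots,\bar\xi_n$; $\bar\xi_{\mathbf i}=\bar\xi_{i_1}\otimes\dots\otimes\bar\xi_{i_r}$; $\mathrm{cont}(\mathbf i)\in\Lambda(n,r)$ records the number of occurrences of each letter. The right action on $V_0^{\otimes r}$: for $\mathbf v=\bar\xi_{k_1}\otimes\dots\otimes\bar\xi_{k_r}$, $\mathbf v\bar\pi_i$ is $\mathbf v$ with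 factors $i,i+1$ swapped if $k_i<k_{i+1}$, is $0$ if $k_i=k_{i+1}$, and is $-\mathbf v$ if $k_i>k_{i+1}$. For $\lambda\in\Lambda(n,r)$: $\mathfrak S_\lambda$ is the Young subgroup, $\bar x_\lambda=\sum_{w\in\mathfrak S_\lambda}\bar\pi_w$, and $\mathbf i_\lambda=[1^{\lambda_1},\dots,n^{\lambda_n}]$. $\phi_0:\bigoplus_\lambda\bar x_\lambda\mathbf H_r(0)\to V_0^{\otimes r}$, $\bar x_\lambda h\mapsto\bar\xi_{\mathbf i_\lambda}h$, is a right module isomorphism. $\mathbf S_0(n,r)$ (complex $0$-Schur algebra) has Jensen–Su basis $\{e_A\}_{A\in M_n(r)}$ and is identified with $\mathrm{End}_{\mathbf H_r(0)}(V_0^{\otimes r})$ through $\phi_0$ as follows. With $R_i^\lambda=\{x:\lambda_1+\dots+\lambda_{i-1}<x\le\lambda_1+\dots+\lambda_i\}$, $\lambda=\mathrm{ro}(A)$, $\mu=\mathrm{co}(A)$, choose $w_A$ with $a_{i,j}=|R_i^\lambda\cap w_AR_j^\mu|$, and let $d_A$ be the shortest element in $\mathfrak S_\lambda w_A\mathfrak S_\mu$. Then $e_A$ acts on $\bigoplus_\nu\bar x_\nu\mathbf H_r(0)$ by $\bar x_\nu h\mapsto\delta_{\mu,\nu}\big(\sum_{x\in\mathfrak S_\lambda d_A\mathfrak S_\mu}\bar\pi_x\big)h$. Define $e_{i,\lambda}=e_{D_\lambda-E_{i+1,i+1}+E_{i,i+1}}$ and $f_{i,\lambda}=e_{D_\lambda-E_{i,i}+E_{i+1,i}}$,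 where $D_\lambda=\mathrm{diag}(\lambda)$ and $E_{a,b}$ are matrix units. $E_i(\mathbf i)$ is the set of words $\mathbf j=[j_1,\dots,j_r]$ such that there is exactly one position $k$ with $i_k=i+1$ and $j_k=i$, $i_\ell\ne i$ for all $\ell>k$, and $j_m=i_m$ for $m\ne k$. $F_i(\mathbf i)$ is the set of words $\mathbf j$ such that there is exactly one position $k$ with $i_k=i$ and $j_k=i+1$, $i_\ell\ne i+1$ for all $\ell<k$, and $j_m=i_m$ for $m\ne k$. *)

(* Defs.v *)
(* Letters 1..n are encoded as 'I_n (0-based), positions
   1..r as 'I_r (0-based). *)
From mathcomp Require Import all_boot all_order all_algebra all_fingroup.
From mathcomp Require Import complex Rstruct.



Unset Printing Implicit Defensive.

Import GRing.Theory.
Local Open Scope ring_scope.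

Definition CC : fieldType := (Rdefinitions.R)[i].

Definition word (n r : nat) := {ffun 'I_r -> 'I_n}.

(* V_0^{(x) r}: vectors are coordinate functions on the basis xi_j *)
Definition tens (n r : nat) := {ffun word n r -> CC}.

Definition xi {n r : nat} (j : word n r) : tens n r := [ffun k => (k == j)%:R].

Definition cont {n r : nat} (j : word n r) : {ffun 'I_n -> nat} :=
  [ffun a => #|[set p : 'I_r | j p == a]|].

Definition block {n : nat} (r : nat) (lam : {ffun 'I_n -> nat}) (a : 'I_n)
  : {set 'I_r} :=
  [set p : 'I_r | (\sum_(b < n | (b < a)%N) lam b <= p)%N
                  && (p < \sum_(b < n | (b <= a)%N) lam b)%N].

(* \bar\xi_{i_lambda}, i_lambda = [1^{lambda_1},...,n^{lambda_n}]: the word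
   whose letter at position p is the a with p in R_a^lambda *)
Definition xi_lam {n r : nat} (lam : {ffun 'I_n -> nat}) : tens n r :=
  [ffun k : word n r => ([forall p, p \in block r lam (k p)] : bool)%:R].

Definition swapw {n r : nat} (p q : 'I_r) (j : word n r) : word n r :=
  [ffun k => j (tperm p q k)].

(* right action of the generator \bar\pi on V_0^{(x) r}, where p, q = p+1 are
   the two positions it acts on *)
Definition gen_act {n r : nat} (p q : 'I_r) (v : tens n r) : tens n r :=
  \sum_(j : word n r) v j *:
    (if (val (j p) < val (j q))%N then xi (swapw p q j)
     else if j p == j q then 0 else - xi j).

(* right action of \bar\pi_w, w in S_r (permutations are functions on
   positions, composed as functions), via a reduced word:
   v \bar\pi_w = (v \bar\pi_{w s}) \bar\pi_s for a right descent s of w. *)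
Fixpoint pact_fuel {n r : nat} (f : nat) (w : {perm 'I_r}) (v : tens n r)
  : tens n r :=
  match f with
  | 0 => v
  | f'.+1 =>
    match [pick pq : 'I_r * 'I_r | (val pq.2 == (val pq.1).+1)
                                   && (val (w pq.2) < val (w pq.1))%N] with
    | None => v
    | Some pq => gen_act pq.1 pq.2 (pact_fuel f' (tperm pq.1 pq.2 * w)%g v)
    end
  end.

Definition pact {n r : nat} (w : {perm 'I_r}) (v : tens n r) : tens n r :=
  pact_fuel (r * r) w v.

Definition young {n : nat} (r : nat) (lam : {ffun 'I_n -> nat})
  : {set {perm 'I_r}} :=
  [set w : {perm 'I_r} |
     [forall a, forall p, (p \in block r lam a) ==> (w p \in block r lam a)]].

Definition ro {n : nat} (A : 'M[nat]_n) : {ffun 'I_n -> nat} :=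
  [ffun a => (\sum_(b < n) A a b)%N].
Definition co {n : nat} (A : 'M[nat]_n) : {ffun 'I_n -> nat} :=
  [ffun b => (\sum_(a < n) A a b)%N].

Definition is_wA {n : nat} (r : nat) (A : 'M[nat]_n) (w : {perm 'I_r}) : bool :=
  [forall a, forall b,
     A a b == #|block r (ro A) a :&: (w @: block r (co A) b)|].

(* the double coset S_lambda w_A S_mu (= S_lambda d_A S_mu) *)
Definition dcoset {n : nat} (r : nat) (A : 'M[nat]_n) : {set {perm 'I_r}} :=
  match [pick w | is_wA r A w] with
  | Some w => [set x : {perm 'I_r} |
                 [exists a in young r (ro A), exists b in young r (co A),
                    x == (b * w * a)%g]]   (* as functions: x = a o w o b *)
  | None => set0
  end.

(* e_A on a basis vector xi_j, transported through phi_0: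
   if cont j = mu = co A then xi_j = phi_0(x_mu pi_d) for some d, and
   e_A(x_mu pi_d) = (sum_{x in S_lambda d_A S_mu} pi_x) pi_d, whose image
   under phi_0 is xi_{i_lambda} (sum_x pi_x) pi_d;
   otherwise (x_nu h with nu <> mu) the image is 0. *)
Definition eA_basis {n r : nat} (A : 'M[nat]_n) (j : word n r) : tens n r :=
  if cont j == co A then
    match [pick d : {perm 'I_r} | pact d (xi_lam (co A)) == xi j] with
    | Some d => pact d (\sum_(x in dcoset r A) pact x (xi_lam (ro A)))
    | None => 0
    end
  else 0.

Definition eA {n r : nat} (A : 'M[nat]_n) (v : tens n r) : tens n r :=
  \sum_(j : word n r) v j *: eA_basis A j.

(* D_lambda - E_{i+1,i+1} + E_{i,i+1}  (here ip = i+1) *)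
Definition Emx {n : nat} (lam : {ffun 'I_n -> nat}) (i ip : 'I_n) : 'M[nat]_n :=
  \matrix_(a, b) (if a == b then (if a == ip then (lam a).-1 else lam a)
                  else if (a == i) && (b == ip) then 1 else 0)%N.
(* D_lambda - E_{i,i} + E_{i+1,i} *)
Definition Fmx {n : nat} (lam : {ffun 'I_n -> nat}) (i ip : 'I_n) : 'M[nat]_n :=
  \matrix_(a, b) (if a == b then (if a == i then (lam a).-1 else lam a)
                  else if (a == ip) && (b == i) then 1 else 0)%N.

(* e_{i,lambda}, f_{i,lambda}; they are 0 when the matrix would have a
   negative entry (lambda_{i+1} = 0, resp. lambda_i = 0). *)
Definition e_il {n r : nat} (lam : {ffun 'I_n -> nat}) (i ip : 'I_n)
  (v : tens n r) : tens n r :=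
  if (0 < lam ip)%N then eA (Emx lam i ip) v else 0.
Definition f_il {n r : nat} (lam : {ffun 'I_n -> nat}) (i ip : 'I_n)
  (v : tens n r) : tens n r :=
  if (0 < lam i)%N then eA (Fmx lam i ip) v else 0.

Definition Eset {n r : nat} (i ip : 'I_n) (w : word n r) : {set word n r} :=
  [set j : word n r | [exists k : 'I_r,
     [&& w k == ip, j k == i,
         [forall l : 'I_r, (k < l)%N ==> (w l != i)] &
         [forall m : 'I_r, (m != k) ==> (j m == w m)]]]].

Definition Fset {n r : nat} (i ip : 'I_n) (w : word n r) : {set word n r} :=
  [set j : word n r | [exists k : 'I_r,
     [&& w k == i, j k == ip,
         [forall l : 'I_r, (l < k)%N ==> (w l != ip)] &
         [forall m : 'I_r, (m != k) ==> (j m == w m)]]]].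

(* Main.v *)
Set Warnings "-notation-overridden -ambiguous-paths -notation-incompatible-prefix".
Require Import Defs.
From mathcomp Require Import all_boot all_order all_algebra all_fingroup.
From mathcomp Require Import complex Rstruct.
From mathcomp Require Import zify.
Import GRing.Theory.
Section Basics.
Variables n r : nat.
Local Open Scope ring_scope.
Implicit Types (u v j : word n r) (w : {perm 'I_r}).

Lemma xiE j k : xi j k = (k == j)%:R.
Proof. by rewrite /xi ffunE. Qed.

Lemma gen_act_xi (p q : 'I_r) j :
  gen_act p q (xi j) =
  if (val (j p) < val (j q))%N then xi (swapw p q j)
  else if j p == j q then 0 else - xi j.
Proof.
rewrite /gen_act (bigD1 j) //= big1 => [|k /negbTE kj]; last first.
  by rewrite xiE kj scale0r.
by rewrite xiE eqxx scale1r addr0.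
Qed.

Lemma gen_actD (p q : 'I_r) (x y : tens n r) :
  gen_act p q (x + y) = gen_act p q x + gen_act p q y.
Proof.
rewrite /gen_act -big_split /=; apply: eq_bigr => j _.
by rewrite ffunE scalerDl.
Qed.

Lemma gen_act0 (p q : 'I_r) : gen_act p q (0%R : tens n r) = 0.
Proof. by rewrite /gen_act big1 // => j _; rewrite ffunE scale0r. Qed.

Lemma pact_fuelD f w (x y : tens n r) :
  pact_fuel f w (x + y) = pact_fuel f w x + pact_fuel f w y.
Proof.
elim: f w => [//|f IH] w /=.
by case: pickP => [pq _|//]; rewrite IH gen_actD.
Qed.

Lemma pact_fuel0 f w : pact_fuel f w (0%R : tens n r) = 0.
Proof.
elim: f w => [//|f IH] w /=.
by case: pickP => [pq _|//]; rewrite IH gen_act0.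
Qed.

Lemma pactD w (x y : tens n r) : pact w (x + y) = pact w x + pact w y.
Proof. exact: pact_fuelD. Qed.
Lemma pact0 w : pact w (0%R : tens n r) = 0.
Proof. exact: pact_fuel0. Qed.

Lemma pact_sum w (I : finType) (P : pred I) (F : I -> tens n r) :
  pact w (\sum_(x | P x) F x) = \sum_(x | P x) pact w (F x).
Proof. exact: (big_morph _ (pactD w) (pact0 w)). Qed.

Lemma tpermNat (p q x : 'I_r) : nat_of_ord (tperm p q x) =
  if nat_of_ord x == p then nat_of_ord q else if nat_of_ord x == q then nat_of_ord p else nat_of_ord x.
Proof.
case: tpermP => [->|->|/eqP xp /eqP xq]; rewrite ?eqxx //.
  by case: (nat_of_ord q =P p).
by rewrite (inj_eq val_inj) (negbTE xp) (inj_eq val_inj) (negbTE xq).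
Qed.

Lemma tperm_lt (p q a b : 'I_r) : val q = (val p).+1 -> (a < b)%N ->
  ~~ ((a == p) && (b == q)) -> (tperm p q a < tperm p q b)%N.
Proof.
move=> /= Hq ab H.
have {H} : ~~ ((nat_of_ord a == p) && (nat_of_ord b == q)) by rewrite !(inj_eq val_inj).
rewrite !tpermNat Hq.
case: (nat_of_ord a =P p) => ?; case: (nat_of_ord a =P (nat_of_ord p).+1) => ?;
case: (nat_of_ord b =P p) => ?; case: (nat_of_ord b =P (nat_of_ord p).+1) => ? /=; lia.
Qed.

Lemma tperm_lt_out (p q a b : 'I_r) : val q = (val p).+1 ->
  a != p -> a != q -> ((a < tperm p q b)%N = (a < b)%N) /\
                        ((tperm p q b < a)%N = (b < a)%N).
Proof.
move=> /= Hq; rewrite -!(inj_eq val_inj) /= !tpermNat Hq.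
case: (nat_of_ord a =P p) => //= ?; case: (nat_of_ord a =P (nat_of_ord p).+1) => //= ?.
case: (nat_of_ord b =P p) => ?; case: (nat_of_ord b =P (nat_of_ord p).+1) => ? /= *;
  split; apply/idP/idP; lia.
Qed.

Definition inv w := #|[set pr : 'I_r * 'I_r | (pr.1 < pr.2)%N && (w pr.2 < w pr.1)%N]|.

Lemma inv_le w : (inv w <= r * r)%N.
Proof. by rewrite /inv (leq_trans (max_card _)) // card_prod card_ord. Qed.

Lemma inv_desc w (p q : 'I_r) : val q = (val p).+1 -> (w q < w p)%N ->
  (inv (tperm p q * w)%g < inv w)%N.
Proof.
move=> Hq Hd; rewrite /inv.
set S1 := [set pr : 'I_r * 'I_r | _].
set S2 := [set pr : 'I_r * 'I_r | _].
pose f (pr : 'I_r * 'I_r) := (tperm p q pr.1, tperm p q pr.2).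
have finj : injective f.
  move=> [a b] [a' b'] [] /perm_inj -> /perm_inj -> //.
have pqin : (p, q) \in S2 by rewrite inE /= Hq ltnSn Hd.
rewrite -(card_imset S1 finj) (cardsD1 (p, q) S2) pqin add1n ltnS.
apply: subset_leq_card; apply/subsetP => x /imsetP [[a b] H ->].
move: H; rewrite inE /= !permM => /andP [ab Hw].
have Hn : ~~ ((a == p) && (b == q)).
  apply/negP => /andP [/eqP ea /eqP eb]; move: Hw; rewrite ea eb tpermL tpermR.
  move: Hd; lia.
rewrite !inE /= Hw (tperm_lt _ _ _ _ Hq ab Hn) andbT /f /=.
rewrite andbT; apply/eqP => -[ea eb].
have ea' : a = q by rewrite -(tpermK p q a) ea tpermL.
have eb' : b = p by rewrite -(tpermK p q b) eb tpermR.
move: ab Hq; rewrite ea' eb' /=; lia.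
Qed.

Lemma incr_fix (y : {perm 'I_r}) (L : pred 'I_r) :
  (forall z, L z -> L (y z)) ->
  (forall z z', L z -> L z' -> (z < z')%N -> (y z < y z')%N) ->
  forall z, L z -> y z = z.
Proof.
move=> HL Hinc z Lz.
have Hit : forall m, L (iter m y z) by elim=> //= m IH; apply: HL.
have Hord : iter #[y]%g y z = z by rewrite -permX expg_order perm1.
have o0 := order_gt0 y.
case: (ltngtP (y z) z) => H; last exact: val_inj.
- have: forall m, (iter m.+1 y z < z)%N.
    elim=> [//|m IH]; rewrite iterS.
    by apply: ltn_trans H; apply: Hinc => //; apply: Hit.
  move/(_ #[y]%g.-1); rewrite prednK // Hord; lia.
- have: forall m, (z < iter m.+1 y z)%N.
    elim=> [//|m IH]; rewrite iterS.
    by apply: ltn_trans H _; apply: Hinc => //; apply: Hit.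
  move/(_ #[y]%g.-1); rewrite prednK // Hord; lia.
Qed.

Lemma incr_id w : (forall a b : 'I_r, (a < b)%N -> (w a < w b)%N) -> w = 1%g.
Proof.
move=> H; apply/permP => z; rewrite perm1.
by apply: (@incr_fix w predT) => // a b _ _; apply: H.
Qed.

Lemma nodesc_incr w :
  (forall p q : 'I_r, val q = (val p).+1 -> (w p < w q)%N) ->
  forall a b : 'I_r, (a < b)%N -> (w a < w b)%N.
Proof.
move=> H a.
suff: forall k (b : 'I_r), val b = (a + k.+1)%N -> (w a < w b)%N.
  by move=> Hk b ab; apply: (Hk (b - a.+1)%N) => /=; lia.
elim=> [|k IH] b /= Hb; first by apply: H => /=; lia.
have b1 : (b.-1 < r)%N by have := ltn_ord b; lia.
apply: (ltn_trans (IH (Ordinal b1) _)); first by rewrite /=; lia.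
by apply: H => /=; lia.
Qed.

Lemma pact_sim (P : {perm 'I_r} -> Prop) (Phi : {perm 'I_r} -> tens n r) (v0 : tens n r) :
  Phi 1%g = v0 ->
  (forall w (p q : 'I_r), P w -> val q = (val p).+1 -> (w q < w p)%N ->
     P (tperm p q * w)%g /\ Phi w = gen_act p q (Phi (tperm p q * w)%g)) ->
  forall w, P w -> pact w v0 = Phi w.
Proof.
move=> H1 Hstep w Pw; rewrite /pact.
suff: forall f w, P w -> (inv w <= f)%N -> pact_fuel f w v0 = Phi w.
  by move=> /(_ _ w Pw (inv_le w)).
elim=> [|f IH] {}w {}Pw.
  rewrite leqn0 => /eqP /cards0_eq Hi /=.
  suff -> : w = 1%g by [].
  apply: incr_id => a b ab; rewrite ltnNge leq_eqVlt negb_or; apply/andP; split.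
    by apply/negP => /eqP/val_inj/perm_inj E; move: ab; rewrite E ltnn.
  apply/negP => Hw.
  have : (a, b) \in [set pr : 'I_r * 'I_r | (pr.1 < pr.2)%N && (w pr.2 < w pr.1)%N].
    by rewrite inE /= ab Hw.
  by rewrite Hi inE.
move=> Hinv /=; case: pickP => [[p q] /= /andP [/eqP Hq Hd]|Hn].
  have [P' ->] := Hstep w p q Pw Hq Hd.
  rewrite IH //; have := inv_desc _ _ _ Hq Hd; lia.
suff -> : w = 1%g by [].
apply: incr_id; apply: nodesc_incr => p q Hq.
have := Hn (p, q); rewrite /= Hq eqxx /= => /negbT; rewrite -leqNgt leq_eqVlt.
case/orP => // /eqP/val_inj/perm_inj E; move: Hq; rewrite E; lia.
Qed.

End Basics.
Arguments tperm_lt {r p q a b}.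
Arguments tperm_lt_out {r p q a b}.
Definition compw {n r} (u : word n r) (w : {perm 'I_r}) : word n r :=
  [ffun a => u (w a)].
Definition condb {n r} (u : word n r) (w : {perm 'I_r}) : bool :=
  [forall a : 'I_r, forall b : 'I_r,
     ((a < b)%N && (w b < w a)%N) ==> (u (w a) != u (w b))].
Definition mono {n r} (u : word n r) :=
  forall a b : 'I_r, (a <= b)%N -> (u a <= u b)%N.
Definition trw {n r} (u : word n r) (k : 'I_r) (c : 'I_n) (w : {perm 'I_r})
  : word n r := [ffun a => if w a == k then c else u (w a)].
Definition relb {n r} (u : word n r) (k : 'I_r) (c : 'I_n) (t b : 'I_r) :=
  ((t < b)%N && (c < u k)%N) || ((b < t)%N && (u k < c)%N).
Definition okb {n r} (u : word n r) (k : 'I_r) (c : 'I_n) (w : {perm 'I_r}) :=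
  [forall b, (u (w b) == c) ==> ~~ relb u k c ((w^-1)%g k) b].

Section Track.
Variables n r : nat.
Local Open Scope ring_scope.
Implicit Types (u v j : word n r) (w : {perm 'I_r}) (k : 'I_r) (c : 'I_n).

Lemma condbP u w : reflect (forall a b : 'I_r, (a < b)%N -> (w b < w a)%N ->
  u (w a) != u (w b)) (condb u w).
Proof.
apply: (iffP forallP) => H.
  by move=> a b ab ba; have /forallP/(_ b)/implyP := H a; apply; rewrite ab ba.
by move=> a; apply/forallP => b; apply/implyP => /andP [ab ba]; apply: H.
Qed.

Lemma condb_step u w (p q : 'I_r) : val q = (val p).+1 -> (w q < w p)%N ->
  condb u w = condb u (tperm p q * w)%g && (u (w q) != u (w p)).
Proof.
move=> Hq Hd; apply/idP/idP.
  move/condbP => H; apply/andP; split; last by rewrite eq_sym; apply: H => //=; rewrite Hq.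
  apply/condbP => a b ab; rewrite !permM => Hw.
  have Hn : ~~ ((a == p) && (b == q)).
    apply/negP => /andP [/eqP ea /eqP eb]; move: Hw; rewrite ea eb tpermL tpermR.
    move: Hd; lia.
  by apply: H => //; apply: tperm_lt.
case/andP => /condbP H Hne; apply/condbP => a b ab Hw.
case E: ((a == p) && (b == q)).
  by case/andP: E => /eqP -> /eqP ->; rewrite eq_sym.
have := H (tperm p q a) (tperm p q b) (tperm_lt Hq ab (negbT E)).
by rewrite !permM !tpermK; apply.
Qed.

Lemma swapw_compw u w (p q : 'I_r) :
  swapw p q (compw u (tperm p q * w)%g) = compw u w.
Proof. by apply/ffunP => a; rewrite !ffunE permM tpermK. Qed.

Lemma pact_mono u w : mono u ->
  pact w (xi u) = if condb u w then xi (compw u w) else 0.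
Proof.
move=> Hu.
apply: (@pact_sim n r (fun _ => True)
  (fun w => if condb u w then xi (compw u w) else 0)) => //.
  have -> : condb u 1 by apply/condbP => a b ab; rewrite !perm1; lia.
  by congr xi; apply/ffunP => a; rewrite ffunE perm1.
move=> {}w p q _ Hq Hd; split => //.
rewrite (condb_step _ _ _ _ Hq Hd).
case: (condb u _) => /=; last by rewrite gen_act0.
rewrite gen_act_xi !ffunE !permM tpermL tpermR.
have := Hu _ _ (ltnW Hd); rewrite leq_eqVlt => /orP [/eqP E|lt].
  have E' : u (w q) = u (w p) by apply: val_inj.
  by rewrite E' eqxx ltnn.
rewrite lt swapw_compw; suff -> : u (w q) != u (w p) by [].
by apply/eqP => E; rewrite E ltnn in lt.
Qed.

Lemma tperm_ltE (p q t b : 'I_r) : val q = (val p).+1 ->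
  ~~ ((t == p) && (b == q)) -> ~~ ((t == q) && (b == p)) ->
  (tperm p q t < tperm p q b)%N = (t < b)%N.
Proof.
move=> /= Hq H1 H2.
have {H1} : ~~ ((nat_of_ord t == p) && (nat_of_ord b == q)) by rewrite !(inj_eq val_inj).
have {H2} : ~~ ((nat_of_ord t == q) && (nat_of_ord b == p)) by rewrite !(inj_eq val_inj).
rewrite !tpermNat Hq.
case: (nat_of_ord t =P p) => ?; case: (nat_of_ord t =P (nat_of_ord p).+1) => ?;
case: (nat_of_ord b =P p) => ?; case: (nat_of_ord b =P (nat_of_ord p).+1) => ? /=;
  move=> *; apply/idP/idP; lia.
Qed.

Lemma forall_tperm (P : pred 'I_r) (p q : 'I_r) :
  [forall b, P b] = [forall b, P (tperm p q b)].
Proof.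
by apply/forallP/forallP => H b //; rewrite -(tpermK p q b).
Qed.

Lemma okb_w' u k c w (p q : 'I_r) :
  okb u k c (tperm p q * w)%g =
  [forall b, (u (w b) == c) ==>
     ~~ relb u k c (tperm p q ((w^-1)%g k)) (tperm p q b)].
Proof.
rewrite /okb (forall_tperm _ p q); apply: eq_forallb => b.
by rewrite permM tpermK invMg permM tpermV.
Qed.

Lemma okb_eq u k c w (p q : 'I_r) : val q = (val p).+1 ->
  (forall b, u (w b) = c -> ~~ (((w^-1)%g k == p) && (b == q)) &&
                            ~~ (((w^-1)%g k == q) && (b == p))) ->
  okb u k c (tperm p q * w)%g = okb u k c w.
Proof.
move=> Hq H; rewrite okb_w' /okb; apply: eq_forallb => b.
case: eqP => //= /H /andP [H1 H2].
rewrite /relb (tperm_ltE _ _ _ _ Hq H1 H2).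
rewrite (tperm_ltE _ _ _ _ Hq) //; first by rewrite andbC.
by rewrite andbC.
Qed.

Lemma okb_false u k c w b : u (w b) = c -> relb u k c ((w^-1)%g k) b ->
  okb u k c w = false.
Proof.
move=> E R; apply/negP => /forallP /(_ b); rewrite E eqxx /=.
by rewrite R.
Qed.

Lemma winv_eq w k a : (w a == k) = (a == (w^-1)%g k).
Proof.
apply/eqP/eqP => [<-|->]; first by rewrite permK.
by rewrite permKV.
Qed.

Lemma swapw_trw u k c w (p q : 'I_r) :
  swapw p q (trw u k c (tperm p q * w)%g) = trw u k c w.
Proof. by apply/ffunP => a; rewrite !ffunE permM tpermK. Qed.

Lemma pact_track u k c w : mono u ->
  (forall z, (u k < u z)%N -> (c <= u z)%N) ->
  (forall z, (u z < u k)%N -> (u z <= c)%N) ->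
  condb u w ->
  pact w (xi (trw u k c 1)) = if okb u k c w then xi (trw u k c w) else 0.
Proof.
move=> Hu H1 H2.
apply: (@pact_sim n r (fun w => condb u w)
  (fun w => if okb u k c w then xi (trw u k c w) else 0)).
  have -> : okb u k c 1.
    apply/forallP => b; apply/implyP => /eqP E; rewrite invg1 perm1 /relb.
    rewrite perm1 in E.
    apply/negP => /orP [/andP [kb ck]|/andP [bk kc]].
      by have := Hu _ _ (ltnW kb); rewrite E; lia.
    by have := Hu _ _ (ltnW bk); rewrite E; lia.
  by [].
move=> {}w p q Cw Hq Hd.
have := Cw; rewrite (condb_step _ _ _ _ Hq Hd) => /andP [Cw' Hne].
split => //.
have lt : (u (w q) < u (w p))%N.
  have := Hu _ _ (ltnW Hd); rewrite leq_eqVlt => /orP [/eqP E|//].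
  by move: Hne; rewrite (val_inj E) eqxx.
have pq : p != q by apply/eqP => E; move: Hq; rewrite E; lia.
have pqN : (p < q)%N by rewrite Hq.
set t := (w^-1)%g k.
have Et a : (w a == k) = (a == t) by rewrite winv_eq.
case Eq: (w q == k); case Ep: (w p == k).
- by move: Eq Ep; rewrite !Et => /eqP Eq' /eqP Ep'; rewrite Eq' Ep' eqxx in pq.
-
  have tq : t = q by apply/eqP; rewrite eq_sym -Et.
  have uk : u k = u (w q) by move/eqP: Eq => ->.
  have cle : (c <= u (w p))%N by apply: H1; rewrite uk.
  move: cle; rewrite leq_eqVlt => /orP [/eqP ce|clt].
  + have ce' : c = u (w p) by apply: val_inj.
    rewrite (@okb_false u k c w p) //; last first.
      by rewrite /relb -/t tq pqN ce' uk lt orbT.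
    case: (okb _ _ _ _); last by rewrite gen_act0.
    by rewrite gen_act_xi !ffunE !permM tpermL tpermR Eq Ep ce' ltnn eqxx.
  + rewrite (okb_eq _ _ _ _ _ _ Hq); last first.
      move=> b Eb; rewrite -/t tq eqxx [q == p]eq_sym (negbTE pq) /=; apply/eqP => bp.
      by move: clt; rewrite -bp Eb ltnn.
    case: (okb _ _ _ _); last by rewrite gen_act0.
    by rewrite gen_act_xi !ffunE !permM tpermL tpermR Eq Ep clt swapw_trw.
-
  have tp : t = p by apply/eqP; rewrite eq_sym -Et.
  have uk : u k = u (w p) by move/eqP: Ep => ->.
  have cle : (u (w q) <= c)%N by apply: H2; rewrite uk.
  move: cle; rewrite leq_eqVlt => /orP [/eqP ce|clt].
  + have ce' : u (w q) = c by apply: val_inj.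
    rewrite (@okb_false u k c w q) //; last first.
      by rewrite /relb -/t tp pqN -ce' uk lt.
    case: (okb _ _ _ _); last by rewrite gen_act0.
    by rewrite gen_act_xi !ffunE !permM tpermL tpermR Eq Ep ce' ltnn eqxx.
  + rewrite (okb_eq _ _ _ _ _ _ Hq); last first.
      move=> b Eb; rewrite -/t tp eqxx (negbTE pq) /= andbT; apply/eqP => bq.
      by move: clt; rewrite -bq Eb ltnn.
    case: (okb _ _ _ _); last by rewrite gen_act0.
    by rewrite gen_act_xi !ffunE !permM tpermL tpermR Eq Ep clt swapw_trw.
- have tp : t != p by rewrite eq_sym -Et Ep.
  have tq : t != q by rewrite eq_sym -Et Eq.
  rewrite (okb_eq _ _ _ _ _ _ Hq); last by move=> b _; rewrite -/t (negbTE tp) (negbTE tq).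
  case: (okb _ _ _ _); last by rewrite gen_act0.
  by rewrite gen_act_xi !ffunE !permM tpermL tpermR Eq Ep lt swapw_trw.
Qed.

End Track.
Definition Psum {n} (lam : {ffun 'I_n -> nat}) (m : nat) : nat :=
  (\sum_(b < n | (b < m)%N) lam b)%N.
Definition issrt {n r} (lam : {ffun 'I_n -> nat}) (s : word n r) :=
  forall p, p \in block r lam (s p).

Section Blocks.
Variables n r : nat.
Implicit Types (u v s j : word n r) (w x : {perm 'I_r}) (lam : {ffun 'I_n -> nat}) (p q z : 'I_r).

Lemma sum_le lam (a : 'I_n) :
  (\sum_(b < n | (b <= a)%N) lam b)%N = (Psum lam a + lam a)%N.
Proof.
rewrite (bigD1 a) //= addnC /Psum; congr (_ + _)%N.
apply: eq_bigl => b; rewrite -(inj_eq val_inj) /=.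
by case: ltngtP.
Qed.

Lemma blockE lam (a : 'I_n) (p : 'I_r) :
  (p \in block r lam a) = (Psum lam a <= p < Psum lam a + lam a)%N.
Proof. by rewrite inE sum_le. Qed.

Lemma Psum_step lam (a b : 'I_n) : (a < b)%N -> (Psum lam a + lam a <= Psum lam b)%N.
Proof.
move=> ab; rewrite -sum_le /Psum [X in (X <= _)%N]big_mkcond [X in (_ <= X)%N]big_mkcond.
apply: leq_sum => x _; case: ifP; case: ifP => //= *; lia.
Qed.

Lemma Psum_total lam (a : 'I_n) : (Psum lam a + lam a <= \sum_(b < n) lam b)%N.
Proof.
rewrite -sum_le [X in (_ <= X)%N](bigID (fun b : 'I_n => (b <= a)%N)) /=.
exact: leq_addr.
Qed.

Lemma block_uniq {lam} {p : 'I_r} {a b : 'I_n} :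
  p \in block r lam a -> p \in block r lam b -> a = b.
Proof.
rewrite !blockE => Ha Hb; apply: val_inj; case: (ltngtP a b) => // ab.
  by have := Psum_step lam _ _ ab; lia.
by have := Psum_step lam _ _ ab; lia.
Qed.

Lemma cont_sum v : (\sum_(a < n) cont v a)%N = r.
Proof.
rewrite -[in RHS](card_ord r) -sum1_card.
rewrite (partition_big v predT) //=.
apply: eq_bigr => a _; rewrite ffunE -sum1_card.
by apply: eq_bigl => p; rewrite inE.
Qed.

Lemma cont_compw u x : cont (compw u x) = cont u.
Proof.
apply/ffunP => a; rewrite !ffunE -[in RHS](card_preimset _ (@perm_inj _ x)).
by apply: eq_card => p; rewrite !inE ffunE.
Qed.

Lemma std_exists v : exists x : {perm 'I_r},
  (forall q : 'I_r, x q \in block r (cont v) (v q)) /\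
  (forall q q' : 'I_r, (q < q')%N -> v q = v q' -> (x q < x q')%N).
Proof.
pose S q := [set q' : 'I_r | (q' < q)%N && (v q' == v q)].
pose dn q := (Psum (cont v) (v q) + #|S q|)%N.
have cnt_lt q : (#|S q| < cont v (v q))%N.
  rewrite ffunE (cardsD1 q [set p | v p == v q]) inE eqxx add1n ltnS.
  apply: subset_leq_card; apply/subsetP => z; rewrite !inE => /andP [zq ->].
  by rewrite andbT -(inj_eq val_inj) /=; apply/eqP => E; rewrite E ltnn in zq.
have dn_r q : (dn q < r)%N.
  have := Psum_total (cont v) (v q); rewrite cont_sum.
  by have := cnt_lt q; rewrite /dn; lia.
have cnt_mono (q q' : 'I_r) : (q < q')%N -> v q = v q' -> (#|S q| < #|S q'|)%N.
  move=> qq E; rewrite (cardsD1 q (S q')) !inE qq E eqxx add1n ltnS.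
  apply: subset_leq_card; apply/subsetP => z; rewrite !inE => /andP [zq /eqP ->].
  rewrite E eqxx !andbT -(inj_eq val_inj) /=; apply/andP; split; last by lia.
  by apply/eqP => E'; rewrite E' ltnn in zq.
pose f q : 'I_r := insubd q (dn q).
have fE q : val (f q) = dn q by rewrite val_insubd dn_r.
have fblock q : f q \in block r (cont v) (v q).
  by rewrite blockE fE /dn; have := cnt_lt q; lia.
have finc (q q' : 'I_r) : (q < q')%N -> v q = v q' -> (f q < f q')%N.
  by move=> qq E; rewrite !fE /dn E; have := cnt_mono q q' qq E; lia.
have finj : injective f.
  move=> q q' E.
  have Ev : v q = v q' by apply: (block_uniq (fblock q)); rewrite E; apply: fblock.
  case: (ltngtP q q') => [qq|qq|]; last exact: val_inj.
    by have := finc q q' qq Ev; rewrite E ltnn.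
  by have := finc q' q qq (esym Ev); rewrite E ltnn.
exists (perm finj); split => [q|q q' qq E]; rewrite !permE; [exact: fblock|exact: finc].
Qed.

Lemma std_sorted v : exists (x : {perm 'I_r}) (s : word n r),
  [/\ issrt (cont v) s, v = compw s x, condb s x & mono s].
Proof.
have [x [Hb Hi]] := std_exists v.
pose s : word n r := [ffun p => v ((x^-1)%g p)].
have Hs : issrt (cont v) s.
  by move=> p; rewrite ffunE -{1}(permKV x p); apply: Hb.
exists x, s; split => //.
- by apply/ffunP => q; rewrite !ffunE permK.
- apply/condbP => a b ab ba; rewrite !ffunE !permK; apply/eqP => E.
  by have := Hi _ _ ab E; lia.
- move=> p p' pp; rewrite leqNgt; apply/negP => lt.
  have := Psum_step (cont v) _ _ lt; have := Hs p; have := Hs p'; rewrite !blockE; lia.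
Qed.

Lemma issrt_block lam s (a : 'I_n) : issrt lam s ->
  block r lam a = [set p | s p == a].
Proof.
move=> Hs; apply/setP => p; apply/idP/idP => [H|].
  by rewrite inE; apply/eqP; exact: (block_uniq (Hs p) H).
by rewrite inE => /eqP <-; exact: Hs.
Qed.

Lemma issrt_uniq lam s s' : issrt lam s -> issrt lam s' -> s = s'.
Proof. by move=> H H'; apply/ffunP => p; apply: (block_uniq (H p) (H' p)). Qed.

Lemma xi_lam_srt lam s : issrt lam s -> xi_lam lam = xi s.
Proof.
move=> Hs; apply/ffunP => k; rewrite !ffunE; congr ((nat_of_bool _)%:R)%R.
apply/idP/eqP => [/forallP H|->]; last by apply/forallP.
by apply/ffunP => p; apply: (block_uniq (H p) (Hs p)).
Qed.

Lemma young_srt lam s x : issrt lam s ->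
  (x \in young r lam) <-> (forall p, s (x p) = s p).
Proof.
move=> Hs; rewrite inE; split.
  move/forallP => H p; have /forallP /(_ p) /implyP := H (s p).
  by move/(_ (Hs p)) => Hx; apply: (block_uniq (Hs (x p)) Hx).
move=> H; apply/forallP => a; apply/forallP => p; apply/implyP.
by rewrite !(issrt_block _ _ _ Hs) !inE H.
Qed.

Lemma condb_uniq s x x' : condb s x -> condb s x' -> compw s x = compw s x' -> x = x'.
Proof.
move=> /condbP C /condbP C' E.
have Ez z : s (x z) = s (x' z) by have := congr1 (fun f : word n r => f z) E; rewrite !ffunE.
pose y := (x * x'^-1)%g.
have yE z : y z = (x'^-1)%g (x z) by rewrite permM.
have x'y z : x' (y z) = x z by rewrite yE permKV.
have xinc (z z' : 'I_r) : (z < z')%N -> s (x z) = s (x z') -> (x z < x z')%N.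
  move=> zz Es; case: (ltngtP (x z) (x z')) => // [H|/val_inj/perm_inj E'].
    by move: (C z z' zz H); rewrite Es eqxx.
  by rewrite E' ltnn in zz.
apply/permP => q.
have Hy : y q = q.
  apply: (@incr_fix r y [pred z | s (x z) == s (x q)]) => //= z.
    by move=> /eqP <-; rewrite Ez x'y.
  move=> z' /eqP Ez1 /eqP Ez2 zz.
  have lt : (x z < x z')%N by apply: xinc => //; rewrite Ez1 Ez2.
  case: (ltngtP (y z) (y z')) => // [H|/val_inj/perm_inj E'].
    by have := C' _ _ H; rewrite !x'y => /(_ lt); rewrite Ez1 Ez2 eqxx.
  by rewrite E' ltnn in zz.
by rewrite -x'y Hy.
Qed.

End Blocks.
Arguments issrt_block {n r lam s} a.
Arguments issrt_uniq {n r lam s s'}.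
Arguments xi_lam_srt {n r lam s}.
Arguments young_srt {n r lam s x}.
Arguments condb_uniq {n r s x x'}.
Arguments std_sorted {n r} v.
Arguments std_exists {n r} v.
Definition Mmx {n} (lam : {ffun 'I_n -> nat}) (c e : 'I_n) : 'M[nat]_n :=
  \matrix_(a, b) (if a == b then (if a == e then (lam a).-1 else lam a)
                  else if (a == c) && (b == e) then 1 else 0)%N.
Definition lamce {n} (lam : {ffun 'I_n -> nat}) (c e : 'I_n) : {ffun 'I_n -> nat} :=
  [ffun a => if a == c then (lam a).+1 else if a == e then (lam a).-1 else lam a].

Section Matrix.
Variables n r : nat.
Local Open Scope ring_scope.
Implicit Types (u v s j : word n r) (w x : {perm 'I_r}) (lam : {ffun 'I_n -> nat}) (p q z k : 'I_r) (c e : 'I_n).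

Lemma xi_inj j j' : xi j = xi j' -> j = j'.
Proof.
move=> /(congr1 (fun f : tens n r => f j)); rewrite !xiE eqxx.
by case: (j =P j') => //= _; rewrite mulr1n mulr0n => /eqP; rewrite oner_eq0.
Qed.

Lemma co_M lam c e : c != e -> (0 < lam e)%N -> co (Mmx lam c e) = lam.
Proof.
move=> ce le; apply/ffunP => b; rewrite ffunE (bigD1 b) //= mxE eqxx.
case: (b =P e) => [->|be].
  rewrite (bigD1 c) /=; last by [].
  rewrite mxE (negbTE ce) !eqxx /= big1 ?addn0.
    by rewrite addn1 prednK.
  move=> a /andP [ae ac]; rewrite mxE (negbTE ae) (negbTE ac) //.
rewrite big1 ?addn0 // => a ab; rewrite mxE (negbTE ab).
by move/eqP: be => /negbTE ->; rewrite andbF.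
Qed.

Lemma ro_M lam c e : c != e -> ro (Mmx lam c e) = lamce lam c e.
Proof.
move=> ce; apply/ffunP => a; rewrite !ffunE (bigD1 a) //= mxE eqxx.
case: (a =P c) => [->|ac].
  rewrite (negbTE ce) (bigD1 e) /=; last by rewrite eq_sym.
  rewrite mxE (negbTE ce) !eqxx /= big1 ?addn0.
    by rewrite addn1.
  move=> b /andP [ba be]; rewrite mxE eq_sym (negbTE ba) (negbTE be) andbF //.
rewrite big1 ?addn0 // => b ab; rewrite mxE eq_sym (negbTE ab).
by move/eqP: ac => /negbTE ->.
Qed.

Lemma trw1E u k c p : trw u k c 1 p = if p == k then c else u p.
Proof. by rewrite ffunE perm1. Qed.

Lemma cont_trw lam u k c e : c != e -> cont u = lam -> u k = e ->
  cont (trw u k c 1) = lamce lam c e.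
Proof.
move=> ce Hc uk; apply/ffunP => a; rewrite !ffunE -Hc ffunE.
have kc : (k \in [set p | u p == c]) = false by rewrite inE uk eq_sym (negbTE ce).
case: (a =P c) => [->|ac].
  have -> : #|[set p | u p == c]|.+1 = #|k |: [set p | u p == c]|.
    by rewrite cardsU1 kc.
  apply: eq_card => p.
  by rewrite !inE trw1E; case: (p =P k); rewrite ?eqxx.
case: (a =P e) => [->|ae].
  rewrite (cardsD1 k [set p | u p == e]) inE uk eqxx add1n /=.
  apply: eq_card => p; rewrite !inE trw1E.
  case: (p =P k) => [->|] /=; first by rewrite (negbTE ce).
  by [].
apply: eq_card => p; rewrite !inE trw1E.
case: (p =P k) => [->|] //=; rewrite uk.
have -> : (c == a) = false by apply/eqP => E; apply: ac; rewrite E.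
by apply/esym/eqP => E; apply: ae; rewrite E.
Qed.

Lemma cnt_trw lam u k c e (a b : 'I_n) : c != e -> cont u = lam -> u k = e ->
  #|[set q | (u q == b) && (trw u k c 1 q == a)]| = Mmx lam c e a b.
Proof.
move=> ce Hc uk; rewrite mxE.
have ce' : c <> e by apply/eqP.
have cu a' : #|[set q | u q == a']| = lam a' by rewrite -Hc ffunE.
case: (a =P b) => [<-|ab].
  case: (a =P e) => [->|ae].
    rewrite -cu (cardsD1 k [set q | u q == e]) inE uk eqxx add1n /=.
    apply: eq_card => q; rewrite !inE trw1E.
    case: (q =P k) => [->|] /=; first by rewrite uk eqxx (negbTE ce).
    by rewrite andbb.
  rewrite -cu; apply: eq_card => q; rewrite !inE trw1E.
  case: (q =P k) => [->|] /=; last by rewrite andbb.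
  by rewrite uk; have -> : (e == a) = false by apply/eqP; congruence.
case: (a =P c) => [Eac|ac]; case: (b =P e) => [Ebe|be] /=.
- rewrite -(cards1 k); apply: eq_card => q; rewrite !inE trw1E.
  case: (q =P k) => [->|qk] /=; first by rewrite uk Eac Ebe !eqxx.
  by apply/negbTE/negP => /andP [/eqP E1 /eqP E2]; congruence.
all: apply/eqP; rewrite cards_eq0; apply/eqP/setP => q; rewrite !inE trw1E.
all: case: (q =P k) => [->|qk] /=; rewrite ?uk.
all: by apply/negbTE/negP => /andP [/eqP E1 /eqP E2]; congruence.
Qed.

Lemma isWA_iff (A : 'M[nat]_n) u u' x :
  issrt (ro A) u' -> issrt (co A) u ->
  is_wA r A x = [forall a, forall b, A a b == #|[set q | (u q == b) && (u' (x q) == a)]|].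
Proof.
move=> Hu' Hu; apply: eq_forallb => a; apply: eq_forallb => b; congr (_ == _).
rewrite (issrt_block a Hu') (issrt_block b Hu).
rewrite -[in RHS](card_imset _ (@perm_inj _ x)); apply: eq_card => p.
rewrite !inE; apply/andP/imsetP.
  move=> [/eqP pa /imsetP [q qin Ep]]; exists q => //.
  by move: qin; rewrite !inE => ->; rewrite -Ep pa eqxx.
move=> [q]; rewrite inE => /andP [qb qa] ->; split => //.
by apply/imsetP; exists q => //; rewrite inE.
Qed.

End Matrix.
Arguments isWA_iff {n r A u u' x}.
Arguments cnt_trw {n r lam u k c e} a b.
Arguments cont_trw {n r lam u k c e}.
Arguments co_M {n lam c e}.
Arguments ro_M {n lam c e}.
Arguments xi_inj {n r j j'}.
Definition Gset {n r} (c e : 'I_n) (w : word n r) : {set word n r} :=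
  [set j : word n r | [exists t : 'I_r,
     [&& w t == e, j t == c,
         [forall l : 'I_r, (((t < l)%N && (c < e)%N) || ((l < t)%N && (e < c)%N))
                              ==> (w l != c)] &
         [forall m : 'I_r, (m != t) ==> (j m == w m)]]]].

Section Main.
Variables n r : nat.
Local Open Scope ring_scope.
Implicit Types (u v s j : word n r) (w x : {perm 'I_r}) (lam : {ffun 'I_n -> nat}) (p q z k : 'I_r) (c e : 'I_n).

Lemma wA_struct lam c e u u' (wA : {perm 'I_r}) : c != e ->
  issrt (ro (Mmx lam c e)) u' -> issrt (co (Mmx lam c e)) u ->
  is_wA r (Mmx lam c e) wA ->
  exists k1, u k1 = e /\ compw u' wA = trw u k1 c 1.
Proof.
move=> ce Hu' Hu; rewrite (isWA_iff Hu' Hu) => /forallP H.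
have Hab a b : Mmx lam c e a b = #|[set q | (u q == b) && (u' (wA q) == a)]|.
  by apply/eqP; have /forallP := H a; move/(_ b).
have : #|[set q | (u q == e) && (u' (wA q) == c)]| == 1%N.
  by rewrite -Hab mxE (negbTE ce) !eqxx.
case/cards1P => k1 Hk1.
have k1in : k1 \in [set q | (u q == e) && (u' (wA q) == c)] by rewrite Hk1 set11.
move: (k1in); rewrite inE => /andP [/eqP uk1 /eqP zk1].
exists k1; split => //; apply/ffunP => q; rewrite ffunE trw1E.
case: (q =P k1) => [->//|qk].
have pos : (0 < #|[set q' | (u q' == u q) && (u' (wA q') == u' (wA q))]|)%N.
  by apply/card_gt0P; exists q; rewrite inE !eqxx.
rewrite -Hab mxE in pos.
case: (u' (wA q) =P u q) => // ab.
move: pos; have -> : (u' (wA q) == u q) = false by apply/eqP.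
case: (u' (wA q) =P c) => [Ea|]; case: (u q =P e) => [Eb|] //=.
move=> _; have : q \in [set q | (u q == e) && (u' (wA q) == c)].
  by rewrite inE Ea Eb !eqxx.
by rewrite Hk1 inE => /eqP.
Qed.

Lemma tperm_trw u k k1 c e z : u k = e -> u k1 = e ->
  trw u k1 c 1 (tperm k k1 z) = trw u k c 1 z.
Proof.
move=> uk uk1; rewrite !trw1E.
case: tpermP => [->|->|/eqP zk /eqP zk1]; rewrite ?eqxx ?uk ?uk1.
- by [].
- by case: (k =P k1) => [->|]; case: (k1 =P k) => [->|] //; rewrite ?eqxx ?uk.
- by rewrite (negbTE zk) (negbTE zk1).
Qed.

Lemma tperm_young u k k1 e z : u k = e -> u k1 = e -> u (tperm k k1 z) = u z.
Proof.
by move=> uk uk1; case: tpermP => [->|->|//]; rewrite ?uk ?uk1.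
Qed.

End Main.
Arguments wA_struct {n r lam c e u u' wA}.
Arguments tperm_trw {n r u k k1 c e}.
Arguments tperm_young {n r u k k1 e}.
Section Main2.
Variables n r : nat.
Local Open Scope ring_scope.
Implicit Types (u v s j : word n r) (w x : {perm 'I_r}) (lam : {ffun 'I_n -> nat}) (p q z k : 'I_r) (c e : 'I_n).

Lemma dcoset_sum lam c e u : c != e -> (0 < lam e)%N -> issrt lam u ->
  cont u = lam ->
  \sum_(x in dcoset r (Mmx lam c e)) pact x (xi_lam (ro (Mmx lam c e)))
  = \sum_(k in [set k | u k == e]) xi (trw u k c 1).
Proof.
move=> ce le Hu Hc.
have coA : co (Mmx lam c e) = lam := co_M ce le.
have roA : ro (Mmx lam c e) = lamce lam c e := ro_M ce.
have HuA : issrt (co (Mmx lam c e)) u by rewrite coA.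
have [k0 uk0] : exists k0, u k0 = e.
  have : (0 < cont u e)%N by rewrite Hc.
  by rewrite ffunE => /card_gt0P [k0]; rewrite inE => /eqP; exists k0.
have Hcont k : u k = e -> cont (trw u k c 1) = ro (Mmx lam c e).
  by move=> uk; rewrite roA; apply: cont_trw.
have [x1 [u' [Hu'0 Ev1 Cx1 Mu']]] := std_sorted (trw u k0 c 1).
have Hu' : issrt (ro (Mmx lam c e)) u' by rewrite -(Hcont k0 uk0).
have Hx1 : is_wA r (Mmx lam c e) x1.
  rewrite (isWA_iff Hu' HuA); apply/forallP => a; apply/forallP => b.
  rewrite -(cnt_trw a b ce Hc uk0) Ev1; apply/eqP; apply: eq_card => q.
  by rewrite !inE ffunE.
rewrite /dcoset; case: pickP => [wA HwA|Hn]; last by have := Hn x1; rewrite Hx1.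
have [k1 [uk1 EZ]] := wA_struct ce Hu' HuA HwA.
have EZq z : u' (wA z) = trw u k1 c 1 z.
  by have := congr1 (fun f : word n r => f z) EZ; rewrite ffunE.
rewrite (xi_lam_srt Hu').
under eq_bigr => x _ do rewrite pact_mono //.
rewrite -big_mkcondr /=.
set D := [set x : {perm 'I_r} | _].
have -> : \sum_(x | (x \in D) && condb u' x) xi (compw u' x)
        = \sum_(x in [set x in D | condb u' x]) xi (compw u' x).
  by apply: eq_bigl => x; rewrite inE.
rewrite -(big_imset (fun j => xi j) (h := compw u')); last first.
  move=> x y; rewrite !inE => /andP [_ Cx] /andP [_ Cy] E.
  exact: condb_uniq Cx Cy E.
rewrite -(big_imset (fun j => xi j) (h := fun k => trw u k c 1)); last first.
  move=> k k'; rewrite !inE => /eqP uk /eqP uk' E.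
  have := congr1 (fun f : word n r => f k) E; rewrite !trw1E eqxx.
  case: (k =P k') => // _ E'; move: ce; rewrite E' uk eqxx //.
apply: eq_bigl => j; apply/imsetP/imsetP.
  move=> [x]; rewrite inE => /andP []; rewrite inE.
  move=> /existsP [a] /andP [ay /existsP [b] /andP [byg /eqP Ex]] Cx ->.
  have Ya : forall z, u' (a z) = u' z by apply/(young_srt Hu').
  have Yb : forall z, u (b z) = u z by apply/(young_srt HuA).
  exists ((b^-1)%g k1).
    by rewrite inE -(Yb ((b^-1)%g k1)) permKV uk1.
  apply/ffunP => p; rewrite trw1E ffunE Ex !permM Ya EZq trw1E Yb.
  by rewrite winv_eq.
move=> [k]; rewrite inE => /eqP uk ->.
have [xk [sk [Hsk Evk Cxk _]]] := std_sorted (trw u k c 1).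
have Esk : sk = u'.
  by apply: (issrt_uniq _ Hu'); rewrite -(Hcont k uk).
rewrite Esk in Evk Cxk.
exists xk; last by [].
rewrite !inE Cxk andbT.
apply/existsP; exists ((tperm k k1 * wA)^-1 * xk)%g.
apply/andP; split.
  apply/(young_srt Hu') => p; rewrite permM.
  set z := ((tperm k k1 * wA)^-1)%g p.
  have Ep : p = wA (tperm k k1 z) by rewrite -permM /z permKV.
  have Ez : u' (xk z) = trw u k c 1 z by rewrite Evk ffunE.
  by rewrite Ez Ep EZq (tperm_trw _ uk uk1).
apply/existsP; exists (tperm k k1); apply/andP; split.
  by apply/(young_srt HuA) => p; apply: (tperm_young _ uk uk1).
by rewrite mulKVg.
Qed.


End Main2.
Arguments dcoset_sum {n r lam c e u}.
Section Final.
Variables n r : nat.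
Local Open Scope ring_scope.
Implicit Types (u v s j : word n r) (w x : {perm 'I_r}) (lam : {ffun 'I_n -> nat}) (p q z k : 'I_r) (c e : 'I_n).

Lemma xi_neq0 j : xi j != 0.
Proof.
apply/eqP => /(congr1 (fun f : tens n r => f j)); rewrite xiE eqxx ffunE.
by move/eqP; rewrite mulr1n oner_eq0.
Qed.

Lemma eA_xi (A : 'M[nat]_n) j : eA A (xi j) = eA_basis A j.
Proof.
rewrite /eA (bigD1 j) //= xiE eqxx scale1r big1 ?addr0 // => k /negbTE kj.
by rewrite xiE kj scale0r.
Qed.


Lemma main_gen lam c e (w : word n r) :
  (val c = (val e).+1 \/ val e = (val c).+1) -> (0 < lam e)%N -> cont w = lam ->
  eA (Mmx lam c e) (xi w) = \sum_(j in Gset c e w) xi j.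
Proof.
move=> /= Hce le Hcw.
have ce : c != e by apply/eqP => E; move: Hce; rewrite E; lia.
rewrite eA_xi /eA_basis (co_M ce le) Hcw eqxx.
have [d0 [u [Hu Ew Cd0 Mu]]] := std_sorted w.
rewrite Hcw in Hu.
have Hcu : cont u = lam by rewrite -Hcw Ew cont_compw.
rewrite (xi_lam_srt Hu).
case: pickP => [d /eqP Hd|Hn]; last first.
  by have := Hn d0; rewrite pact_mono // Cd0 -Ew eqxx.
rewrite pact_mono // in Hd.
move: Hd; case Cd: (condb u d) => Hd; last first.
  by have := xi_neq0 w; rewrite -Hd eqxx.
have Edw : compw u d = w := xi_inj Hd.
have wE z : w z = u (d z) by rewrite -Edw ffunE.
rewrite (dcoset_sum ce le Hu Hcu) pact_sum.
rewrite (eq_bigr (fun k => if okb u k c d then xi (trw u k c d) else 0)); last first.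
  move=> k; rewrite inE => /eqP uk; apply: pact_track => // z; rewrite uk; lia.
rewrite -big_mkcondr /=.
rewrite (eq_bigl (fun k => k \in [set k | (u k == e) && okb u k c d])); last first.
  by move=> k; rewrite !inE.
rewrite -(big_imset (fun j => xi j) (h := fun k => trw u k c d)); last first.
  move=> k k'; rewrite !inE => /andP [/eqP uk _] /andP [/eqP uk' _] E.
  have := congr1 (fun f : word n r => f ((d^-1)%g k)) E; rewrite !ffunE permKV eqxx.
  case: (k =P k') => // _; rewrite uk => E'.
  by move: ce; rewrite E' eqxx.
apply: eq_bigl => j; apply/imsetP/idP.
  move=> [k]; rewrite inE => /andP [/eqP uk ok] ->.
  rewrite inE; apply/existsP; exists ((d^-1)%g k).
  rewrite wE permKV uk eqxx ffunE permKV !eqxx /=.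
  apply/andP; split.
    apply/forallP => l; apply/implyP => R; rewrite wE; apply/negP => /eqP Hl.
    by move: (forallP ok l); rewrite Hl eqxx /relb uk R.
  apply/forallP => m; apply/implyP => mt; rewrite ffunE wE.
  by rewrite winv_eq (negbTE mt) eqxx.
rewrite inE => /existsP [t /and4P [/eqP wt /eqP jt /forallP Hl /forallP Hm]].
exists (d t).
  rewrite inE -wE wt eqxx /=.
  apply/forallP => b; apply/implyP => /eqP ub; rewrite permK.
  rewrite /relb -wE wt; apply/negP => R.
  by have := implyP (Hl b) R; rewrite wE ub eqxx.
apply/ffunP => m; rewrite ffunE (inj_eq (@perm_inj _ d)).
case: (m =P t) => [->|mt]; first by rewrite jt.
by have := implyP (Hm m) (introN eqP mt); rewrite -wE => /eqP.
Qed.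

Lemma eA_zero lam c e (w : word n r) : c != e -> (0 < lam e)%N -> cont w != lam ->
  eA (Mmx lam c e) (xi w) = 0.
Proof.
by move=> ce le Hcw; rewrite eA_xi /eA_basis (co_M ce le) (negbTE Hcw).
Qed.

Lemma Gset_empty lam c e (w : word n r) : cont w = lam -> lam e = 0%N ->
  \sum_(j in Gset c e w) xi j = 0.
Proof.
move=> Hcw l0; rewrite big1 // => j; rewrite inE => /existsP [t /and4P [/eqP wt _ _ _]].
move/eqP: l0; rewrite -Hcw ffunE cards_eq0 => /eqP S0.
have : t \in [set p | w p == e] by rewrite inE wt.
by rewrite S0 inE.
Qed.

End Final.
Arguments main_gen {n r lam c e w}.
Arguments eA_zero {n r lam c e w}.
Arguments Gset_empty {n r lam} c {e w}.

Local Open Scope ring_scope.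

(* i : 'I_n is the paper's letter i (0-based), ip is the letter i+1, so
   1 <= i <= n-1 in the paper's indexing. *)
Theorem mainTheorem8 (n r : nat) (lam : {ffun 'I_n -> nat}) (i ip : 'I_n)
  (w : word n r) :
  (\sum_(a < n) lam a)%N = r ->
  val ip = (val i).+1 ->
  e_il lam i ip (xi w)
    = (if cont w == lam then \sum_(j in Eset i ip w) xi j else 0)
  /\
  f_il lam i ip (xi w)
    = (if cont w == lam then \sum_(j in Fset i ip w) xi j else 0).
Proof.
move=> _ Hip.
have Hip' : nat_of_ord ip = (nat_of_ord i).+1 by [].
have h1 : (i < ip)%N by rewrite Hip'.
have h2 : (ip < i)%N = false by rewrite Hip' ltnNge leqnSn.
have EG : Eset i ip w = Gset i ip w.
  apply/setP => j; rewrite !inE; apply/existsP/existsP => -[t /and4P [H1 H2 H3 H4]];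
    exists t; rewrite H1 H2 H4 /= andbT; apply/forallP => l; have := forallP H3 l;
    rewrite h1 h2 /= ?andbT ?andbF ?orbF //.
have FG : Fset i ip w = Gset ip i w.
  apply/setP => j; rewrite !inE; apply/existsP/existsP => -[t /and4P [H1 H2 H3 H4]];
    exists t; rewrite H1 H2 H4 /= andbT; apply/forallP => l; have := forallP H3 l;
    rewrite h1 h2 /= ?andbT ?andbF ?orbF //.
have cie : ip != i by apply/eqP => E; move: Hip'; rewrite E; lia.
have cei : i != ip by rewrite eq_sym.
split.
- rewrite /e_il EG.
  have -> : Emx lam i ip = Mmx lam i ip by [].
  case: (posnP (lam ip)) => [l0|lp].
    case: (cont w =P lam) => [Hcw|//].
    by rewrite (Gset_empty i Hcw l0).
  case: (cont w =P lam) => [Hcw|Hcw].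
    by apply: main_gen => //; right.
  by apply: eA_zero => //; apply/eqP.
- rewrite /f_il FG.
  have -> : Fmx lam i ip = Mmx lam ip i by [].
  case: (posnP (lam i)) => [l0|lp].
    case: (cont w =P lam) => [Hcw|//].
    by rewrite (Gset_empty ip Hcw l0).
  case: (cont w =P lam) => [Hcw|Hcw].
    by apply: main_gen => //; left.
  by apply: eA_zero => //; apply/eqP.
Qed.
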